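(* Let $n$ be a positive integer and let $\mathcal F$ be an $\mathcal N$-saturated family of subsets of $[n]$. Let $A,B,C,D\in\mathcal F$ be distinct sets forming an induced butterfly with maximal elements $A,B$, i.e. $C\subset A$, $C\subset B$, $D\subset A$, $D\subset B$, $A,B$ are incomparable and $C,D$ are incomparable. Then there exists $M\in\mathcal F$ such that $C\cup D\subseteq M\subseteq A\cap B$.
   Context: The poset $\mathcal N$ has four elements $a,b,c,d$ with $a<c$, $b<c$, $b<d$ and no other comparabilities. A family $\mathcal Q$ of sets (ordered by inclusion) contains an induced copy of $\mathcal N$ if there are distinct sets in $\mathcal Q$ whose inclusion relations are exactly those of $a,b,c,d$ above. A family $\mathcal F$ of subsets of $[n]=\{1,\dots,n\}$ is $\mathcal N$-saturated if $\mathcal F$ contains no induced copy of $\mathcal N$, but for every $S\subseteq[n]$ with $S\notin\mathcal F$, the family $\mathcal F\cup\{S\}$ contains an induced copy of $\mathcal N$. *)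

(* Defs.v *)
From mathcomp Require Import all_boot.
Set Implicit Arguments. Unset Strict Implicit. Unset Printing Implicit Defensive.

Definition incomparable {T : finType} (X Y : {set T}) : bool :=
  ~~ (X \subset Y) && ~~ (Y \subset X).

Definition induced_N {T : finType} (a b c d : {set T}) : bool :=
  [&& uniq [:: a; b; c; d],
      a \subset c, b \subset c, b \subset d,
      incomparable a b, incomparable a d & incomparable c d].

Definition has_induced_N {T : finType} (Q : {set {set T}}) : Prop :=
  exists a b c d, [/\ a \in Q, b \in Q, c \in Q, d \in Q & induced_N a b c d].

Definition N_saturated (n : nat) (F : {set {set 'I_n}}) : Prop :=
  ~ has_induced_N F /\
  forall S : {set 'I_n}, S \notin F -> has_induced_N (S |: F).

(* Main.v *)
Require Import Defs.
From mathcomp Require Import all_boot.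
Set Implicit Arguments. Unset Strict Implicit. Unset Printing Implicit Defensive.

Lemma mkN (T:finType) (a b c d : {set T}) : a != b -> a != c -> a != d -> b != c -> b != d -> c != d -> a \subset c -> b \subset c -> b \subset d -> ~~ (a \subset b) -> ~~ (b \subset a) -> ~~ (a \subset d) -> ~~ (d \subset a) -> ~~ (c \subset d) -> ~~(d \subset c) -> induced_N a b c d.
Proof.
move=> *; rewrite /induced_N /incomparable /= !inE !negb_or.
by repeat (apply/andP; split).
Qed.

Lemma unN (T:finType) (a b c d : {set T}) (G : Prop) : induced_N a b c d ->
 (a != b -> a != c -> a != d -> b != c -> b != d -> c != d -> a \subset c -> b \subset c -> b \subset d -> ~~ (a \subset b) -> ~~ (b \subset a) -> ~~ (a \subset d) -> ~~ (d \subset a) -> ~~ (c \subset d) -> ~~(d \subset c) -> G) -> G.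
Proof.
rewrite /induced_N /incomparable /= !inE !negb_or.
case/and5P => /and4P[/and3P[? ? ?] /andP[? ?] ? _] ? ? ? /and4P[/andP[? ?] /andP[? ?] ? ?] K.
by apply: K.
Qed.

Lemma lowL (T:finType) (C D y : {set T}) : ~~ (C :|: D \subset y) ->
  exists2 l, l \in [:: C; D] & (l \subset C :|: D) && ~~ (l \subset y).
Proof.
rewrite subUset negb_and => /orP[h|h].
  by exists C; rewrite ?inE ?eqxx // subsetUl h.
by exists D; rewrite ?inE ?eqxx ?orbT // subsetUr h.
Qed.

Lemma noN n (F : {set {set 'I_n}}) C D I : ~ has_induced_N F -> I \notin F -> C \in F -> D \in F ->
  C :|: D \subset I -> (forall x, x \in F -> C :|: D \subset x -> I \subset x) ->
  (forall y : {set 'I_n}, ~~ (y \subset I) -> exists2 u : {set 'I_n}, u \in F & (I \subset u) && ~~ (y \subset u)) ->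
  ~ has_induced_N (I |: F).
Proof.
move=> nF nI HC HD hS P2 hU [a [b [c [d [Ha Hb Hc Hd HN]]]]].
apply: (@unN _ a b c d False HN) => ab ac ad bc bd cd sac sbc sbd nab nba nad nda ncd ndc.
have memF x : x \in I |: F -> x != I -> x \in F.
  by rewrite in_setU1 => /orP[/eqP->|//]; rewrite eqxx.
have lF l : l \in [:: C; D] -> l \in F by rewrite !inE => /orP[]/eqP->.
have P2' x : x \in F -> ~~ (I \subset x) -> ~~ (C :|: D \subset x).
  by move=> xF; apply: contra; apply: P2.
case: (eqVneq a I) => [eaI|naI].
  subst a.
  have bF := memF _ Hb (ltac:(by rewrite eq_sym)).
  have cF := memF _ Hc (ltac:(by rewrite eq_sym)).
  have dF := memF _ Hd (ltac:(by rewrite eq_sym)).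
  have [l /lF lF' /andP[lS ld]] := lowL (P2' _ dF nad).
  have lI := subset_trans lS hS.
  have lb : ~~ (l \subset b) by apply: contra ld => lb; exact: subset_trans lb sbd.
  apply: nF; exists l, b, c, d; split => //; apply: mkN => //.
  - by apply/eqP => E; move: lb; rewrite E subxx.
  - by apply/eqP => E; move: nba; rewrite (subset_trans sbc) // -E.
  - by apply/eqP => E; move: ld; rewrite E subxx.
  - exact: subset_trans lI sac.
  - by apply: contra nba => bl; exact: subset_trans bl lI.
  - by apply: contra nda => dl; exact: subset_trans dl lI.
have aF := memF _ Ha naI.
case: (eqVneq b I) => [ebI|nbI].
  subst b.
  have cF := memF _ Hc (ltac:(by rewrite eq_sym)).
  have dF := memF _ Hd (ltac:(by rewrite eq_sym)).
  have [l /lF lF' /andP[lS la]] := lowL (P2' _ aF nba).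
  have lI := subset_trans lS hS.
  apply: nF; exists a, l, c, d; split => //; apply: mkN => //.
  - by apply/eqP => E; move: la; rewrite E subxx.
  - by apply/eqP => E; move: nab; rewrite (subset_trans sac) // -E.
  - by apply/eqP => E; move: ndc; rewrite -E (subset_trans lI sbc).
  - exact: subset_trans lI sbc.
  - exact: subset_trans lI sbd.
  - by apply: contra nab => al; exact: subset_trans al lI.
have bF := memF _ Hb nbI.
case: (eqVneq c I) => [ecI|ncI].
  subst c.
  have dF := memF _ Hd (ltac:(by rewrite eq_sym)).
  have [u uF /andP[Iu du]] := hU _ ndc.
  apply: nF; exists a, b, u, d; split => //; apply: mkN => //.
  - by apply/eqP => E; move: nba; rewrite E (subset_trans sbc Iu).
  - by apply/eqP => E; move: nab; rewrite E (subset_trans sac Iu).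
  - by apply/eqP => E; move: du; rewrite E subxx.
  - exact: subset_trans sac Iu.
  - exact: subset_trans sbc Iu.
  - by apply: contra ncd => ud; exact: subset_trans Iu ud.
have cF := memF _ Hc ncI.
case: (eqVneq d I) => [edI|ndI].
  subst d.
  have [u uF /andP[Iu au]] := hU _ nad.
  apply: nF; exists a, b, c, u; split => //; apply: mkN => //.
  - by apply/eqP => E; move: au; rewrite E subxx.
  - by apply/eqP => E; move: ndc; rewrite (subset_trans Iu) // -E.
  - by apply/eqP => E; move: au; rewrite -E sac.
  - exact: subset_trans sbd Iu.
  - by apply: contra nda => ua; exact: subset_trans Iu ua.
  - by apply: contra au => cu; exact: subset_trans sac cu.
  - by apply: contra ndc => uc; exact: subset_trans Iu uc.
have dF := memF _ Hd ndI.
by apply: nF; exists a, b, c, d.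
Qed.

Lemma step n (F : {set {set 'I_n}}) C D (I : {set 'I_n}) : N_saturated F -> C \in F -> D \in F ->
  (forall I' : {set 'I_n}, #|I'| < #|I| -> C :|: D \subset I' ->
     (forall y : {set 'I_n}, ~~ (y \subset I') -> exists2 u : {set 'I_n}, u \in F & (I' \subset u) && ~~ (y \subset u)) ->
     exists2 M, M \in F & (C :|: D \subset M) && (M \subset I')) ->
  C :|: D \subset I ->
  (forall y : {set 'I_n}, ~~ (y \subset I) -> exists2 u : {set 'I_n}, u \in F & (I \subset u) && ~~ (y \subset u)) ->
  exists2 M, M \in F & (C :|: D \subset M) && (M \subset I).
Proof.
move=> sat HC HD IH hS hU.
case: (boolP [exists x in F, (C :|: D \subset x) && ~~ (I \subset x)]) => [/exists_inP[x xF /andP[Sx Ix]] | /exists_inPn P2].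
  have h1 : #|I :&: x| < #|I|.
    by apply: proper_card; rewrite properE subsetIl /= subsetI subxx /= Ix.
  have h2 : C :|: D \subset I :&: x by rewrite subsetI hS Sx.
  have h3 : forall y : {set 'I_n}, ~~ (y \subset I :&: x) -> exists2 u : {set 'I_n}, u \in F & (I :&: x \subset u) && ~~ (y \subset u).
    move=> y; rewrite subsetI negb_and => /orP[yI|yx].
      have [u uF /andP[Iu yu]] := hU y yI; exists u => //.
      by rewrite yu (subset_trans (subsetIl I x) Iu).
    by exists x => //; rewrite subsetIr yx.
  have [M MF /andP[SM MI]] := IH _ h1 h2 h3.
  by exists M => //; rewrite SM (subset_trans MI (subsetIl _ _)).
have P2' x : x \in F -> C :|: D \subset x -> I \subset x.
  by move=> xF Sx; move: (P2 x xF); rewrite Sx /= negbK.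
case: (boolP (I \in F)) => IF; first by exists I; rewrite // hS subxx.
exfalso; apply: (noN sat.1 IF HC HD hS P2' hU); exact: sat.2 I IF.
Qed.

Lemma main_ind n (F : {set {set 'I_n}}) C D : N_saturated F -> C \in F -> D \in F ->
  forall k (I : {set 'I_n}), #|I| <= k -> C :|: D \subset I ->
  (forall y : {set 'I_n}, ~~ (y \subset I) -> exists2 u : {set 'I_n}, u \in F & (I \subset u) && ~~ (y \subset u)) ->
  exists2 M, M \in F & (C :|: D \subset M) && (M \subset I).
Proof.
move=> sat HC HD k; elim: k => [|k IH] I hk.
  by apply: step => // I' hI'; have := leq_trans hI' hk.
apply: step => // I' hI'; apply: IH; exact: leq_trans hI' hk.
Qed.

Theorem corollary2p4 (n : nat) (F : {set {set 'I_n}}) (A B C D : {set 'I_n}) :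
  0 < n ->
  N_saturated F ->
  A \in F -> B \in F -> C \in F -> D \in F ->
  uniq [:: A; B; C; D] ->
  C \subset A -> C \subset B -> D \subset A -> D \subset B ->
  incomparable A B -> incomparable C D ->
  exists2 M, M \in F & (C :|: D \subset M) && (M \subset A :&: B).
Proof.
move=> _ sat HA HB HC HD _ CA CB DA DB _ _.
apply: (main_ind sat HC HD (leqnn #|A :&: B|)).
  by rewrite subUset !subsetI CA CB DA DB.
move=> y; rewrite subsetI negb_and => /orP[yA|yB].
  by exists A => //; rewrite subsetIl yA.
by exists B => //; rewrite subsetIr yB.
Qed.
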